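(* Let $N\ge1$, and let $q,\gamma\ne0,s_0,\xi_0\ne0$ and $u_1,\dots,u_N,v_1,\dots,v_N$ be generic complex numbers. Define $$\mathsf Z(u,v)=\frac{(1-\gamma)(q-\gamma^{-1}s_0^2)(1-uv)+(1-q)(1-\xi_0s_0u)(1-\xi_0^{-1}s_0v)}{(1-uv)(1-quv)},$$ $$\mathsf M_i(v)=\xi_0^{2i-N}v^{N-i-1}\Big\{(1-s_0\xi_0^{-1}v)(v\xi_0^{-1}-s_0)\prod_{l=1}^N\frac{1-qvu_l}{1-vu_l}-\gamma^{-1}q^{N-i}(\gamma-s_0\xi_0^{-1}v)(\gamma qv\xi_0^{-1}-s_0)\Big\},$$ $$\widetilde{\mathsf M}_i(u)=u^{N-i-1}\Big\{(1-s_0\xi_0u)(u-s_0/\xi_0)\prod_{l=1}^N\frac{1-quv_l}{1-uv_l}-\gamma^{-1}q^{N-i}(\gamma-s_0\xi_0u)(\gamma qu-s_0/\xi_0)\Big\}.$$ Then $$\frac{\prod_{i,j=1}^N(1-qu_iv_j)}{\prod_{1\le i<j\le N}(u_i-u_j)(v_i-v_j)}\det\big[\mathsf Z(u_i,v_j)\big]_{i,j=1}^N=\frac{\det[\mathsf M_i(v_j)]_{i,j=1}^N}{\prod_{1\le i<j\le N}(v_i-v_j)}=\frac{\det[\widetilde{\mathsf M}_i(u_j)]_{i,j=1}^N}{\prod_{1\le i<j\le N}(u_i-u_j)}.$$ *)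

(* Defs.v *)
From mathcomp Require Import all_boot all_algebra.
From mathcomp Require Import Rstruct complex.
Set Implicit Arguments. Unset Strict Implicit. Unset Printing Implicit Defensive.
Import GRing.Theory Num.Theory.
Local Open Scope ring_scope.

Notation C := (Rdefinitions.R[i]).

Definition Zfun (q gamma s0 xi0 u v : C) : C :=
  ((1 - gamma) * (q - gamma^-1 * s0 ^+ 2) * (1 - u * v)
   + (1 - q) * (1 - xi0 * s0 * u) * (1 - xi0^-1 * s0 * v))
  / ((1 - u * v) * (1 - q * u * v)).

(* M_i(v), for the paper's index i in 1..N (integer exponents) *)
Definition Mfun (N : nat) (q gamma s0 xi0 : C) (u : 'I_N -> C) (i : nat) (v : C) : C :=
  xi0 ^ (2 * (i : int) - (N : int)) * v ^ ((N : int) - (i : int) - 1) *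
  ((1 - s0 * xi0^-1 * v) * (v * xi0^-1 - s0) *
     \prod_(l < N) ((1 - q * v * u l) / (1 - v * u l))
   - gamma^-1 * q ^+ (N - i) * (gamma - s0 * xi0^-1 * v) * (gamma * q * v * xi0^-1 - s0)).

Definition Mtfun (N : nat) (q gamma s0 xi0 : C) (v : 'I_N -> C) (i : nat) (u : C) : C :=
  u ^ ((N : int) - (i : int) - 1) *
  ((1 - s0 * xi0 * u) * (u - s0 / xi0) *
     \prod_(l < N) ((1 - q * u * v l) / (1 - u * v l))
   - gamma^-1 * q ^+ (N - i) * (gamma - s0 * xi0 * u) * (gamma * q * u - s0 / xi0)).

Definition vandprod (N : nat) (x : 'I_N -> C) : C :=
  \prod_(i < N) \prod_(j < N | (i < j)%N) (x i - x j).

(* Main.v *)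
Require Import Defs.
From mathcomp Require Import all_boot all_algebra.
From mathcomp Require Import Rstruct complex.
From mathcomp Require Import ring lra zify.
Import GRing.Theory Num.Theory.
Set Implicit Arguments. Unset Strict Implicit. Unset Printing Implicit Defensive.
Local Open Scope ring_scope.

Definition Qp N (y : 'I_N -> C) (k : 'I_N) : C := \prod_(l < N | l != k) (y k - y l).

Lemma Qp_neq0 N (y : 'I_N -> C) (hy : injective y) k : Qp y k != 0.
Proof.
apply/prodf_neq0 => l hl; rewrite subr_eq0; apply/eqP => /hy e.
by rewrite e eqxx in hl.
Qed.

Lemma card_neq N (k : 'I_N) : #|[pred l : 'I_N | l != k]| = N.-1.
Proof. have := cardC1 k; rewrite card_ord => <-; exact: eq_card. Qed.

Definition lin (a : C) : {poly C} := (- a)%:P * 'X + 1%:P.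

Lemma size_lin a : a != 0 -> size (lin a) = 2%N.
Proof.
move=> ha; rewrite /lin size_MXaddC polyC_eq0 oppr_eq0 (negbTE ha) /=.
by rewrite size_polyC oppr_eq0 ha.
Qed.

Lemma lin_neq0 a : a != 0 -> lin a != 0.
Proof. by move=> ha; rewrite -size_poly_eq0 size_lin. Qed.

Lemma horner_lin a w : (lin a).[w] = 1 - w * a.
Proof. rewrite /lin !hornerE; ring. Qed.

Lemma Hlem N (y : 'I_N -> C) (hy : injective y) (hy0 : forall k, y k != 0)
  (m : nat) (hm : (m < N)%N) (w : C) :
  \sum_(k < N) y k ^+ m / Qp y k * \prod_(l < N | l != k) (1 - w * y l)
  = w ^+ (N.-1 - m).
Proof.
set P := \sum_(k < N) (y k ^+ m / Qp y k) *: \prod_(l < N | l != k) lin (y l)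
         - 'X^(N.-1 - m).
have hsz : (size P <= N)%N.
  apply: leq_trans (size_polyD _ _) _; rewrite geq_max size_polyN size_polyXn.
  apply/andP; split; last by lia.
  apply: leq_trans (size_sum _ _ _) _; apply/bigmax_leqP => k _.
  apply: leq_trans (size_scale_leq _ _) _.
  rewrite size_prod; last by move=> l _; apply: lin_neq0.
  rewrite (eq_bigr (fun _ => 2%N)); last by move=> l _; rewrite size_lin.
  rewrite sum_nat_const.
  have -> : #|[pred l : 'I_N | l != k]| = N.-1 by exact: card_neq.
  lia.
have P0 : P = 0.
  apply: (@roots_geq_poly_eq0 _ P [seq (y k)^-1 | k <- enum 'I_N]).
  - apply/allP => x /mapP [j _ ->]; rewrite /root /P hornerD hornerN hornerXn.
    rewrite horner_sum (bigD1 j) //= [X in _ + X - _]big1 => [|k hk]; last first.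
      rewrite hornerZ horner_prod (bigD1 j) 1?eq_sym //= horner_lin.
      by rewrite mulVf // subrr mul0r mulr0.
    rewrite addr0 hornerZ horner_prod.
    rewrite (eq_bigr (fun l => (y j - y l) * (y j)^-1)); last first.
      by move=> l _; rewrite horner_lin; field.
    rewrite big_split /= -/(Qp y j) prodr_const.
    have -> : #|[pred l : 'I_N | l != j]| = N.-1 by exact: card_neq.
    set n := (N.-1 - m)%N.
    have -> : N.-1 = (n + m)%N by rewrite /n; lia.
    rewrite exprD !exprVn subr_eq0; apply/eqP.
    have := Qp_neq0 hy j; have := hy0 j; set a := y j; set b := Qp y j.
    move=> ha hb; field.
    by rewrite Qp_neq0 // !expf_neq0.
  - rewrite map_inj_uniq ?enum_uniq // => a b /invr_inj; exact: hy.
  - by rewrite size_map size_enum_ord.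
have := congr1 (fun p => p.[w]) P0.
rewrite /= /P hornerD hornerN hornerXn horner0 horner_sum => /eqP.
rewrite subr_eq0 => /eqP <-; apply: eq_bigr => k _.
rewrite hornerZ horner_prod; congr (_ * _); apply: eq_bigr => l _.
by rewrite horner_lin.
Qed.

Lemma Hdiv N (y : 'I_N -> C) (hy : injective y) (hy0 : forall k, y k != 0)
  (m : nat) (hm : (m < N)%N) (w : C) (hw : forall l, 1 - w * y l != 0) :
  \sum_(k < N) y k ^+ m / (Qp y k * (1 - w * y k))
  = w ^+ (N.-1 - m) / \prod_(l < N) (1 - w * y l).
Proof.
have hP : \prod_(l < N) (1 - w * y l) != 0 by apply/prodf_neq0 => l _.
rewrite -(Hlem hy hy0 hm w) mulr_suml; apply: eq_bigr => k _.
rewrite [\prod_(l < N) _](bigD1 k) //=.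
have := Qp_neq0 hy k; have := hw k.
set a := \prod_(l < N | l != k) _. set b := Qp y k. set d := 1 - w * y k.
move=> hd hb; field; apply/and3P; split => //.
by move: hP; rewrite (bigD1 k) //= -/a -/d mulf_eq0 negb_or => /andP [].
Qed.

Definition Hf N (y : 'I_N -> C) (i0 : nat) (w : C) :=
  w ^+ (N.-1 - i0) / \prod_(l < N) (1 - w * y l).

Lemma rowgen N (y : 'I_N -> C) (hy : injective y) (hy0 : forall k, y k != 0)
  (i0 : nat) (hi : (i0 < N)%N) (al c F q x : C) (hx : x != 0)
  (h1 : forall l, 1 - x * y l != 0) (h2 : forall l, 1 - q * x * y l != 0) :
  \sum_(k < N) y k ^+ i0 / Qp y k *
     ((al * (1 - y k * x) + (1 - q) * (1 - c * y k) * F)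
        / ((1 - y k * x) * (1 - q * y k * x)))
  = al * Hf y i0 (q * x)
    + F * ((1 - c / x) * Hf y i0 x - (q - c / x) * Hf y i0 (q * x)).
Proof.
rewrite /Hf -!(Hdiv hy hy0 hi) //.
rewrite mulrBr !mulr_sumr -!sumrB -big_split /=; apply: eq_bigr => k _.
have := Qp_neq0 hy k; have := h1 k; have := h2 k.
set b := Qp y k; set a := y k.
move=> ha2 ha1 hb.
have e1 : 1 - a * x != 0 by rewrite mulrC.
have e2 : 1 - q * a * x != 0 by rewrite mulrAC.
by field; rewrite ha1 ha2 hb hx.
Qed.

Lemma prodQp N (y : 'I_N -> C) :
  \prod_(k < N) Qp y k
  = vandprod y * \prod_(i < N) \prod_(j < N | (i < j)%N) (y j - y i).
Proof.
rewrite /Qp /vandprod.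
rewrite (eq_bigr (fun k : 'I_N => \prod_(l < N | (k < l)%N) (y k - y l) *
                          \prod_(l < N | (l < k)%N) (y k - y l))); last first.
  move=> k _; rewrite (bigID (fun l : 'I_N => (k < l)%N)) /=; congr (_ * _).
    apply: eq_bigl => l; rewrite -val_eqE /=.
    by case: (ltngtP k l) => h //=; rewrite ?andbF // gtn_eqF.
  apply: eq_bigl => l; rewrite -val_eqE /=.
  by case: (ltngtP k l) => h //=; rewrite ?andbF ?eqxx // ltn_eqF.
rewrite big_split /=; congr (_ * _).
by rewrite (exchange_big_dep predT).
Qed.

Lemma vand_neq0 N (y : 'I_N -> C) (hy : injective y) :
  vandprod y * \prod_(i < N) \prod_(j < N | (i < j)%N) (y j - y i) != 0.
Proof. by rewrite -prodQp; apply/prodf_neq0 => k _; apply: Qp_neq0. Qed.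

Lemma det_fact N (y : 'I_N -> C) (hy : injective y) (E Zm : 'M[C]_N)
  (s p : 'I_N -> C) :
  (forall i j, E i j = s i * \sum_(k < N) (y k ^+ i / Qp y k) * (Zm k j * p j)) ->
  \det E = (\prod_(i < N) s i) * \det Zm * (\prod_(j < N) p j) / vandprod y.
Proof.
move=> hE.
have -> : E = (diag_mx (\row_i s i) *m
                (Vandermonde N (\row_k y k) *m diag_mx (\row_k (Qp y k)^-1)))
              *m (Zm *m diag_mx (\row_j p j)).
  apply/matrixP => i j; rewrite hE mul_diag_mx !mul_mx_diag !mxE mulr_sumr.
  by apply: eq_bigr => k _; rewrite !mxE mulrA.
rewrite !det_mulmx !det_diag det_Vandermonde.
have := vand_neq0 hy; rewrite -prodQp.
under eq_bigr do rewrite mxE.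
under [X in _ * (_ * X) * _]eq_bigr do rewrite mxE.
under [X in _ * (_ * X)]eq_bigr do rewrite mxE.
under [X in _ * (X * _) * _]eq_bigr do under eq_bigr do rewrite !mxE.
rewrite prodfV prodQp => hne.
move: hne; rewrite mulf_eq0 negb_or => /andP [h1 h2].
set A := \prod_(i < N) s i; set B := vandprod y.
set D := \prod_(i < N) _.
field; by rewrite h1 h2.
Qed.

Lemma expz_sub (x : C) (a b : nat) : x != 0 -> x ^ ((a:int) - (b:int)) = x ^+ a / x ^+ b.
Proof. by move=> hx; rewrite expfzDr // -exprnN. Qed.

Lemma rowM N (q g s0 xi : C) (u : 'I_N -> C) (hu : injective u)
  (hu0 : forall k, u k != 0) (hg : g != 0) (hxi : xi != 0) (v : C) (hv : v != 0)
  (h1 : forall l, 1 - v * u l != 0) (h2 : forall l, 1 - q * v * u l != 0)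
  (i0 : nat) (hi : (i0 < N)%N) :
  Mfun q g s0 xi u i0.+1 v = (xi ^+ (2 * i0 + 1) / xi ^+ N) *
    \sum_(k < N) (u k ^+ i0 / Qp u k) * (Zfun q g s0 xi (u k) v * \prod_(l < N) (1 - q * v * u l)).
Proof.
under eq_bigr do rewrite mulrA.
rewrite -mulr_suml /Zfun (rowgen hu hu0 hi _ _ _ hv h1 h2) /Hf /Mfun.
have -> : (2 * (i0.+1:int) - (N:int) = ((2 * i0 + 2)%N:int) - (N:int))%R by lia.
have -> : ((N:int) - (i0.+1:int) - 1 = (N:int) - ((i0+2)%N:int))%R by lia.
rewrite !expz_sub // prodf_div.
have [n hn] : exists n, N = (i0 + n + 1)%N by exists (N - i0.+1)%N; lia.
have -> : (N.-1 - i0 = n)%N by lia.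
have -> : (N - i0.+1 = n)%N by lia.
have -> : v ^+ N = v ^+ n * v ^+ i0 * v by rewrite hn addn1 exprS exprD; ring.
have -> : (2 * i0 + 2 = (2 * i0 + 1).+1)%N by lia.
have -> : (i0 + 2 = i0.+1.+1)%N by lia.
rewrite !exprS exprMn.
have hA : \prod_(l < N) (1 - q * v * u l) != 0 by apply/prodf_neq0.
have hB : \prod_(l < N) (1 - v * u l) != 0 by apply/prodf_neq0.
have hX : xi ^+ N != 0 by rewrite expf_neq0.
have hV : v ^+ i0 != 0 by rewrite expf_neq0.
move: hA hB hX hV.
set A := \prod_(l < N) (1 - q * v * u l).
set B := \prod_(l < N) (1 - v * u l).
set X := xi ^+ N. set X1 := xi ^+ (2 * i0 + 1). set V0 := v ^+ i0.
set Vn := v ^+ n. set Qn := q ^+ n.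
move=> hA hB hX hV.
field.
by rewrite hA hB hX hV hv hxi hg.
Qed.

Lemma rowMt N (q g s0 xi : C) (v : 'I_N -> C) (hv : injective v)
  (hv0 : forall k, v k != 0) (hg : g != 0) (hxi : xi != 0) (u : C) (hu : u != 0)
  (h1 : forall l, 1 - u * v l != 0) (h2 : forall l, 1 - q * u * v l != 0)
  (i0 : nat) (hi : (i0 < N)%N) :
  Mtfun q g s0 xi v i0.+1 u = 
    \sum_(k < N) (v k ^+ i0 / Qp v k) * (Zfun q g s0 xi u (v k) * \prod_(l < N) (1 - q * u * v l)).
Proof.
under eq_bigr do rewrite mulrA.
rewrite -mulr_suml.
have eZ : forall k, Zfun q g s0 xi u (v k) =
  ((1 - g) * (q - g^-1 * s0 ^+ 2) * (1 - v k * u)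
   + (1 - q) * (1 - (xi^-1 * s0) * v k) * (1 - xi * s0 * u))
  / ((1 - v k * u) * (1 - q * v k * u)).
  by move=> k; rewrite /Zfun; congr (_ / _); ring.
under eq_bigr do rewrite eZ.
rewrite (rowgen hv hv0 hi _ _ _ hu h1 h2) /Hf /Mtfun.
have -> : ((N:int) - (i0.+1:int) - 1 = (N:int) - ((i0 + 2)%N:int))%R by lia.
rewrite !expz_sub // prodf_div.
have [n hn] : exists n, N = (i0 + n + 1)%N by exists (N - i0.+1)%N; lia.
have -> : (N.-1 - i0 = n)%N by lia.
have -> : (N - i0.+1 = n)%N by lia.
have -> : u ^+ N = u ^+ n * u ^+ i0 * u by rewrite hn addn1 exprS exprD; ring.
have -> : (i0 + 2 = i0.+1.+1)%N by lia.
rewrite !exprS exprMn.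
have hA : \prod_(l < N) (1 - q * u * v l) != 0 by apply/prodf_neq0.
have hB : \prod_(l < N) (1 - u * v l) != 0 by apply/prodf_neq0.
have hV : u ^+ i0 != 0 by rewrite expf_neq0.
move: hA hB hV.
set A := \prod_(l < N) (1 - q * u * v l).
set B := \prod_(l < N) (1 - u * v l).
set V0 := u ^+ i0.
set Vn := u ^+ n. set Qn := q ^+ n.
move=> hA hB hV.
field.
by rewrite hA hB hV hu hxi hg.
Qed.

Lemma sum_odd N : (\sum_(i < N) (2 * i + 1) = N * N)%N.
Proof. elim: N => [|N IH]; first by rewrite big_ord0. by rewrite big_ord_recr /= IH; lia. Qed.

Lemma vprod_neq0 N (y : 'I_N -> C) (hy : injective y) : vandprod y != 0.
Proof. by have := vand_neq0 hy; rewrite mulf_eq0 negb_or => /andP []. Qed.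

Theorem theorem4p1 (N : nat) (q gamma s0 xi0 : C) (u v : 'I_N -> C)
  (hN : (1 <= N)%N)
  (hgamma : gamma != 0) (hxi0 : xi0 != 0)
  (hu0 : forall i, u i != 0) (hv0 : forall j, v j != 0)
  (hu : injective u) (hv : injective v)
  (huv : forall i j, 1 - u i * v j != 0)
  (hquv : forall i j, 1 - q * u i * v j != 0) :
  (\prod_(i < N) \prod_(j < N) (1 - q * u i * v j)) / (vandprod u * vandprod v)
    * \det (\matrix_(i < N, j < N) Zfun q gamma s0 xi0 (u i) (v j))
  = \det (\matrix_(i < N, j < N) Mfun q gamma s0 xi0 u i.+1 (v j)) / vandprod v
  /\
  \det (\matrix_(i < N, j < N) Mfun q gamma s0 xi0 u i.+1 (v j)) / vandprod v
  = \det (\matrix_(i < N, j < N) Mtfun q gamma s0 xi0 v i.+1 (u j)) / vandprod u.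
Proof.
set Z := \matrix_(i < N, j < N) Zfun q gamma s0 xi0 (u i) (v j).
have dM : \det (\matrix_(i < N, j < N) Mfun q gamma s0 xi0 u i.+1 (v j))
  = (\prod_(i < N) (xi0 ^+ (2 * i + 1) / xi0 ^+ N)) * \det Z *
    (\prod_(j < N) \prod_(l < N) (1 - q * v j * u l)) / vandprod u.
  apply: det_fact => // i j; rewrite !mxE.
  under [in RHS]eq_bigr do rewrite mxE.
  apply: rowM => //.
  - by move=> l; have := huv l j; rewrite mulrC.
  - by move=> l; have := hquv l j; rewrite mulrAC.
have dMt : \det (\matrix_(i < N, j < N) Mtfun q gamma s0 xi0 v i.+1 (u j))
  = (\prod_(i < N) (1 : C)) * \det Z^T *
    (\prod_(j < N) \prod_(l < N) (1 - q * u j * v l)) / vandprod v.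
  apply: det_fact => // i j; rewrite !mxE mul1r.
  under [in RHS]eq_bigr do rewrite !mxE.
  exact: rowMt.
have s1 : \prod_(i < N) (xi0 ^+ (2 * i + 1) / xi0 ^+ N) = 1.
  rewrite prodf_div prodrXr prodr_const sum_odd card_ord -exprM.
  by rewrite divff // expf_neq0.
have eP : \prod_(j < N) \prod_(l < N) (1 - q * v j * u l)
        = \prod_(i < N) \prod_(j < N) (1 - q * u i * v j).
  rewrite exchange_big; apply: eq_bigr => i _; apply: eq_bigr => j _.
  by rewrite mulrAC.
rewrite big1_eq in dMt.
rewrite dM dMt s1 eP det_tr.
have := vprod_neq0 hu; have := vprod_neq0 hv.
set A := vandprod u; set B := vandprod v => hB hA.
split; field; by rewrite hA hB.
Qed.
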